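(* Let $N, R, k\in\mathbb{N}$. For every choice of bijections $g_1,\dots,g_R:[N]\to[N]$ there exists a depth-$k$ transformer (with learned embeddings) that, without Chain-of-Thought, solves the $k$-hop factual recall problem, i.e. on every input $(s_0,r_1,\dots,r_k)\in[N]\times[R]^k$ it correctly outputs $(g_{r_k}\circ\cdots\circ g_{r_1})(s_0)$, using either of the following architectures: (1) embedding dimension $d=\tilde O(k)$ and MLP width $O(N\cdot R)$; (2) embedding dimension $d=\tilde O(R^k)$ and MLP width $\tilde O(R^k)$.
   Context: Write $[N]=\{1,\dots,N\}$. Subjects are $[N]$, relations are $[R]$, each relation $r$ has a bijection $g_r:[N]\to[N]$. The transformer is over vocabulary $[N]\cup[R]$ with embeddings in $\mathbb{R}^d$; each layer applies (causal, softmax) multi-head self-attention $Z=\sum_h W_V^{(h)}X(A^{(h)})^\top$ with $A^{(h)}=\mathrm{softmax}((W_K^{(h)}X)^\top(W_Q^{(h)}X))$, a residual connection $\tilde X = Z+X$, and a column-wise ReLU MLP with residual connection $X'=\tilde X+\mathrm{MLP}(\tilde X)$; ''depth $k$'' means $k$ such layers, and MLP width is its hidden width. The notation $\tilde O(\cdot)$ suppresses logarithmic factors (in $N$, $R$, $k$). *)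

(* Defs.v *)
From HB Require Import structures.
From Stdlib Require Reals.
From mathcomp Require Import all_boot all_order all_algebra all_fingroup.
From mathcomp Require Import Rstruct.
Set Implicit Arguments. Unset Strict Implicit. Unset Printing Implicit Defensive.
Import Order.TTheory GRing.Theory Num.Theory.
Local Open Scope ring_scope.

Notation Real := Rdefinitions.R.

Record head (d : nat) := Head {
  WK : 'M[Real]_(d, d);
  WQ : 'M[Real]_(d, d);
  WV : 'M[Real]_(d, d) }.

Record layer (d m : nat) := Layer {
  heads : seq (head d);
  W1 : 'M[Real]_(m, d);
  b1 : 'cV[Real]_m;
  W2 : 'M[Real]_(d, m);
  b2 : 'cV[Real]_d }.

Definition relu (x : Real) : Real := Num.max x 0.

(* Causal softmax attention matrix A (T x T): A j i is the weight that
   query position j puts on key position i; zero for i > j.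
   The scores are S = (WK X)^T (WQ X), i.e. S i j = <WK x_i, WQ x_j>. *)
Definition attn_matrix d T (h : head d) (X : 'M[Real]_(d, T)) : 'M[Real]_T :=
  let S := (WK h *m X)^T *m (WQ h *m X) in
  \matrix_(j, i)
    (if (nat_of_ord i <= nat_of_ord j)%N then
       Rtrigo_def.exp (S i j) /
       (\sum_(i' < T | (nat_of_ord i' <= nat_of_ord j)%N) Rtrigo_def.exp (S i' j))
     else 0).

Definition mhsa d T (hs : seq (head d)) (X : 'M[Real]_(d, T)) : 'M[Real]_(d, T) :=
  \sum_(h <- hs) (WV h *m X *m (attn_matrix h X)^T).

Definition mlp d m (L : layer d m) (x : 'cV[Real]_d) : 'cV[Real]_d :=
  W2 L *m map_mx relu (W1 L *m x + b1 L) + b2 L.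

Definition apply_layer d m T (L : layer d m) (X : 'M[Real]_(d, T)) : 'M[Real]_(d, T) :=
  let Xt := mhsa (heads L) X + X in
  Xt + \matrix_(i, j) (mlp L (col j Xt)) i 0.

Record transformer (V : finType) (d m T : nat) := Transformer {
  emb : V -> 'I_T -> 'cV[Real]_d;
  layers : seq (layer d m);
  unemb : V -> 'rV[Real]_d }.

Definition depth V d m T (M : transformer V d m T) : nat := size (layers M).

Definition hidden V d m T (M : transformer V d m T) (toks : 'I_T -> V)
  : 'M[Real]_(d, T) :=
  foldl (fun X L => apply_layer L X)
        (\matrix_(i, j) (emb M (toks j) j) i 0) (layers M).

(* The transformer outputs token v on input toks (no chain of thought: a
   single forward pass, read at the last position) iff the logit of v at the
   last position is strictly larger than the logit of every other token. *)
Definition outputs V d m T (M : transformer V d m T.+1) (toks : 'I_T.+1 -> V)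
  (v : V) : Prop :=
  let x := col ord_max (hidden M toks) in
  forall w : V, w != v -> (unemb M w *m x) 0 0 < (unemb M v *m x) 0 0.

Definition vocab (N R : nat) : finType := ('I_N + 'I_R)%type.

Definition khop_input N R k (s0 : 'I_N) (rs : 'I_k -> 'I_R) : 'I_k.+1 -> vocab N R :=
  fun j => match unlift ord0 j with
           | None => inl s0
           | Some i => inr (rs i)
           end.

Definition khop_answer N R k (g : 'I_R -> {perm 'I_N}) (s0 : 'I_N)
  (rs : 'I_k -> 'I_R) : 'I_N :=
  foldl (fun s i => g (rs i) s) s0 (enum 'I_k).

Definition solves_khop N R k (g : 'I_R -> {perm 'I_N}) d m
  (M : transformer (vocab N R) d m k.+1) : Prop :=
  forall (s0 : 'I_N) (rs : 'I_k -> 'I_R),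
    outputs M (khop_input s0 rs) (inl (khop_answer g s0 rs)).

Definition polylog (N R k c : nat) : nat := (trunc_log 2 (N * R * k)).+1 ^ c.

(* Main.v *)
Require Import Defs.
From mathcomp Require Import all_boot all_order all_algebra all_fingroup.
From mathcomp Require Import Rstruct.
From mathcomp Require Import ring lra zify.
Set Implicit Arguments. Unset Strict Implicit. Unset Printing Implicit Defensive.
Import Order.TTheory GRing.Theory Num.Theory.
Local Open Scope ring_scope.

Lemma relu_pos (x : Real) : 0 <= x -> relu x = x.
Proof. by move=> h; rewrite /relu max_l. Qed.
Lemma relu_neg (x : Real) : x <= 0 -> relu x = 0.
Proof. by move=> h; rewrite /relu max_r. Qed.

Definition gate (s B t : Real) : Real :=
  relu (s - B * t) + relu (s + B * t) - relu (B * t) - relu (- (B * t)) - relu s.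

Lemma gate_val (s B : Real) (a b : nat) : 0 <= s -> s <= B ->
  gate s B (a%:R - b%:R) = if a == b then s else 0.
Proof.
move=> s0 sB.
have hn : ~~ (a == b) -> gate s B (a%:R - b%:R) = 0.
  move=> /negbTE hne; rewrite /gate.
  case: (ltngtP a b) => hab; last by rewrite hab eqxx in hne.
  - have h1 : (a%:R : Real) + 1 <= b%:R by rewrite natr1 ler_nat.
    have hB : B * (a%:R - b%:R) <= - B by nra.
    rewrite (relu_pos (x := s - _)); last lra.
    rewrite (relu_neg (x := s + _)); last lra.
    rewrite (relu_neg (x := B * _)); last lra.
    rewrite (relu_pos (x := - _)); last lra.
    rewrite relu_pos //; lra.
  - have h1 : (b%:R : Real) + 1 <= a%:R by rewrite natr1 ler_nat.
    have hB : B <= B * (a%:R - b%:R) by nra.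
    rewrite (relu_neg (x := s - _)); last lra.
    rewrite (relu_pos (x := s + _)); last lra.
    rewrite (relu_pos (x := B * _)); last lra.
    rewrite (relu_neg (x := - _)); last lra.
    rewrite relu_pos //; lra.
case: eqP => [->|/eqP hne]; last exact: hn.
rewrite /gate subrr mulr0 oppr0 ?subr0 ?addr0 relu_pos //.
rewrite (relu_pos (lexx (0:Real))). lra.
Qed.

Lemma exp0R : Rtrigo_def.exp 0 = 1.
Proof. exact: Rtrigo_def.exp_0. Qed.

Lemma attn_last d k (WV : 'M[Real]_d) (X : 'M[Real]_(d, k.+1)) i :
  attn_matrix (Head 0 0 WV) X ord_max i = (k.+1)%:R^-1.
Proof.
rewrite /attn_matrix /= mxE.
set S := (_ *m _).
have hS : forall a b, S a b = 0.
  move=> a b; rewrite /S !mxE big1 // => c _; rewrite !mxE big1 ?mul0r // => e _; by rewrite mxE mul0r.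
rewrite leq_ord hS exp0R.
rewrite (eq_bigl xpredT); last by move=> j; rewrite leq_ord.
under eq_bigr do rewrite hS exp0R.
by rewrite sumr_const card_ord mul1r.
Qed.

Lemma mhsa_last d k (WV : 'M[Real]_d) (X : 'M[Real]_(d, k.+1)) c :
  (mhsa [:: Head 0 0 (k.+1%:R *: WV)] X) c ord_max = \sum_j (WV *m X) c j.
Proof.
rewrite /mhsa big_seq1 /= mxE; apply: eq_bigr => j _.
rewrite [_^T _ _]mxE attn_last mxE.
under eq_bigr do rewrite mxE -mulrA.
rewrite -mulr_sumr mulrC mulrA mulVf ?mul1r; last by rewrite pnatr_eq0.
by rewrite mxE.
Qed.

Lemma apply_layer_col d m T (L : layer d m) (X : 'M[Real]_(d, T)) j :
  col j (apply_layer L X) =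
  col j (mhsa (heads L) X + X) + mlp L (col j (mhsa (heads L) X + X)).
Proof.
apply/matrixP => a b; rewrite /apply_layer /= !mxE.
congr (_ + _); last by rewrite (ord1 b).
Qed.

Lemma mhsa_nil d T (X : 'M[Real]_(d, T)) : mhsa [::] X = 0.
Proof. by rewrite /mhsa big_nil. Qed.

Lemma sum_blocks (F : nat -> Real) G :
  \sum_(n < G * 5) F n = \sum_(g < G) \sum_(e < 5) F (g * 5 + e)%N.
Proof.
elim: G => [|G IH]; first by rewrite mul0n !big_ord0.
rewrite [RHS]big_ord_recr /= -IH.
rewrite mulSnr big_split_ord /=; congr (_ + _).
Qed.

Definition alphaE (e : nat) : Real := if e == 2%N then 0 else if e == 3%N then 0 else 1.
Definition betaE (e : nat) : Real :=
  if e == 0%N then -1 else if e == 1%N then 1 else if e == 2%N then 1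
  else if e == 3%N then -1 else 0.
Definition sgnE (e : nat) : Real := if e == 0%N then 1 else if e == 1%N then 1 else -1.

Section Bank.
Variables (d G : nat) (Sc Tc : nat -> 'I_d -> Real) (s0 t0 Bv : nat -> Real)
  (om : 'I_d -> nat -> Real).

Definition bW1 : 'M[Real]_(G * 5, d) :=
  \matrix_(n, c) (alphaE (n %% 5) * Sc (n %/ 5) c + betaE (n %% 5) * Bv (n %/ 5) * Tc (n %/ 5) c).
Definition bb1 : 'cV[Real]_(G * 5) :=
  \col_n (alphaE (n %% 5) * s0 (n %/ 5) + betaE (n %% 5) * Bv (n %/ 5) * t0 (n %/ 5)).
Definition bW2 : 'M[Real]_(d, G * 5) := \matrix_(c, n) (om c (n %/ 5) * sgnE (n %% 5)).

Definition gsig g (x : 'cV[Real]_d) := \sum_c Sc g c * x c 0 + s0 g.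
Definition gtau g (x : 'cV[Real]_d) := \sum_c Tc g c * x c 0 + t0 g.

Lemma bank_mlp hs (x : 'cV[Real]_d) c :
  mlp (Layer hs bW1 bb1 bW2 0) x c 0 =
  \sum_(g < G) om c g * gate (gsig g x) (Bv g) (gtau g x).
Proof.
rewrite /mlp /= !mxE addr0.
have pre : forall n : 'I_(G * 5),
  map_mx relu (bW1 *m x + bb1) n 0 =
  relu (alphaE (n %% 5) * gsig (n %/ 5) x + betaE (n %% 5) * (Bv (n %/ 5) * gtau (n %/ 5) x)).
  move=> n; rewrite !mxE /gsig /gtau; congr relu.
  under eq_bigr do rewrite mxE.
  rewrite !mulrDr !mulr_sumr.
  rewrite (_ : \sum_(i < d) _ = \sum_(i < d) alphaE (n %% 5) * (Sc (n %/ 5) i * x i 0) +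
      \sum_(i < d) betaE (n %% 5) * (Bv (n %/ 5) * (Tc (n %/ 5) i * x i 0))).
    ring.
  rewrite -big_split; apply: eq_bigr => i _ /=; ring.
pose Fn := (fun n : nat => om c (n %/ 5) * sgnE (n %% 5) *
   relu (alphaE (n %% 5) * gsig (n %/ 5) x + betaE (n %% 5) * (Bv (n %/ 5) * gtau (n %/ 5) x))).
rewrite (eq_bigr (fun n : 'I_(G * 5) => Fn (nat_of_ord n))); last by move=> n _; rewrite pre mxE.
rewrite sum_blocks /Fn.
apply: eq_bigr => g _.
have hd : forall e, (e < 5)%N -> ((g * 5 + e) %/ 5 = g)%N /\ ((g * 5 + e) %% 5 = e)%N.
  move=> e he; split; first by rewrite divnMDl // divn_small // addn0.
  by rewrite modnMDl modn_small.
rewrite !big_ord_recr big_ord0 /=.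
rewrite !(proj1 (hd _ _)) // !(proj2 (hd _ _)) //.
rewrite /alphaE /betaE /sgnE /gate /=.
rewrite !mul1r !mulN1r !mul0r !add0r !addr0.
ring.
Qed.
End Bank.

Lemma sum_ind1 d (a : 'I_d) (f : 'I_d -> Real) :
  \sum_c (c == a)%:R * f c = f a.
Proof.
rewrite (bigD1 a) //= eqxx mul1r big1 ?addr0 // => c /negbTE ->; by rewrite mul0r.
Qed.

Lemma sum_nat_ind (F : nat -> Real) n a : (a < n)%N ->
  \sum_(j < n) F j * (if a == j then 1 else 0) = F a.
Proof.
move=> h; rewrite (bigD1 (Ordinal h)) //= eqxx mulr1 big1 ?addr0 // => j hj.
case: eqP => [e|]; last by rewrite mulr0.
by move: hj; rewrite -val_eqE /= e eqxx.
Qed.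

Lemma quad_lt (p a : nat) : p != a ->
  1 - p%:R ^+ 2 + 2 * p%:R * a%:R < 1 + a%:R ^+ 2 :> Real.
Proof.
move=> hne; case: (ltngtP p a) => h.
- have h1 : (p%:R : Real) + 1 <= a%:R by rewrite natr1 ler_nat.
  nra.
- have h1 : (a%:R : Real) + 1 <= p%:R by rewrite natr1 ler_nat.
  nra.
- by rewrite h eqxx in hne.
Qed.

Section Hop.
Variables (N R : nat) (g : 'I_R -> {perm 'I_N}).

Definition hopn (n : nat) : nat :=
  match (insub (n %/ N)%N : option 'I_R), (insub (n %% N)%N : option 'I_N) with
  | Some r, Some s => val (g r s)
  | _, _ => 0%N
  end.

Lemma hopnE (r : 'I_R) (s : 'I_N) : hopn (s + N * r) = g r s.
Proof.
have N0 : (0 < N)%N by case: N s => [[]|].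
rewrite /hopn.
have -> : ((s + N * r) %/ N = r)%N by rewrite mulnC addnC divnMDl // divn_small // addn0.
have -> : ((s + N * r) %% N = s)%N by rewrite mulnC addnC modnMDl modn_small.
by rewrite !valK.
Qed.

Lemma idx_lt (r : 'I_R) (s : 'I_N) : (s + N * r < N * R)%N.
Proof.
have := ltn_ord s; have := ltn_ord r => h1 h2. nia.
Qed.
End Hop.

Definition tval N R (t : vocab N R) : Real :=
  match t with inl s => (val s)%:R | inr r => (val r)%:R end.

Section C1.
Variables (N R k' : nat) (g : 'I_R -> {perm 'I_N}).
Local Notation K1 := (k'.+2).
Local Notation d1 := ((K1 + K1)%N.+1).

Definition sc1 : 'I_d1 := inord K1.
Definition rc1 (i : 'I_k'.+1) : 'I_d1 := inord (K1 + i.+1).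
Definition cc1 : 'I_d1 := inord (K1 + K1).

Lemma sc1E : nat_of_ord sc1 = K1. Proof. by rewrite /sc1 inordK // ltnS leq_addr. Qed.
Lemma rc1E i : nat_of_ord (rc1 i) = (K1 + i.+1)%N.
Proof. rewrite /rc1 inordK //; have := ltn_ord i; lia. Qed.
Lemma cc1E : nat_of_ord cc1 = (K1 + K1)%N. Proof. by rewrite /cc1 inordK. Qed.

Lemma rc1_sc i : (rc1 i == sc1) = false.
Proof. by rewrite -val_eqE /= rc1E sc1E; apply/negbTE; lia. Qed.
Lemma cc1_sc : (cc1 == sc1) = false.
Proof. by rewrite -val_eqE /= cc1E sc1E; apply/negbTE; lia. Qed.
Lemma cc1_rc i : (cc1 == rc1 i) = false.
Proof. rewrite -val_eqE /= cc1E rc1E; apply/negbTE; have := ltn_ord i; lia. Qed.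

Definition emb1 (t : vocab N R) (p : 'I_K1) : 'cV[Real]_d1 :=
  \col_c (if val c == val p then tval t else if val c == (K1 + K1)%N then 1 else 0).

Definition Wv1 : 'M[Real]_d1 :=
  \matrix_(a, c) (if (K1 <= a)%N && (a < K1 + K1)%N && (val c == a - K1)%N then 1 else 0).

Definition head1 : Defs.head d1 := Head 0 0 (K1%:R *: Wv1).

Definition om1 (c : 'I_d1) (n : nat) : Real :=
  (c == sc1)%:R * ((hopn g n)%:R - (n %% N)%N%:R).

Definition Tc1 (i : 'I_k'.+1) : nat -> 'I_d1 -> Real :=
  fun _ c => (c == sc1)%:R + N%:R * (c == rc1 i)%:R.

Definition L1 (i : 'I_k'.+1) (hs : seq (Defs.head d1)) : layer d1 ((N * R) * 5) :=
  Layer hs (bW1 (N * R) (fun _ _ => 0) (Tc1 i) (fun _ => 1))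
           (bb1 (N * R) (fun _ => 1) (fun n => - n%:R) (fun _ => 1))
           (bW2 (N * R) om1) 0.

Definition unemb1 (t : vocab N R) : 'rV[Real]_d1 :=
  match t with
  | inl v => \row_c ((c == sc1)%:R * (2 * (val v)%:R) + (c == cc1)%:R * (1 - (val v)%:R ^+ 2))
  | inr _ => 0
  end.

Definition M1 : transformer (vocab N R) d1 ((N * R) * 5) K1 :=
  Transformer emb1 (L1 ord0 [:: head1] :: map (fun i => L1 i [::]) (map (lift ord0) (enum 'I_k')))
    unemb1.

Definition P1 (rs : 'I_k'.+1 -> 'I_R) (s : 'I_N) (x : 'cV[Real]_d1) : Prop :=
  [/\ x sc1 0 = (val s)%:R, (forall i, x (rc1 i) 0 = (val (rs i))%:R) & x cc1 0 = 1].

Lemma step1 rs s i hs x : P1 rs s x -> P1 rs (g (rs i) s) (x + mlp (L1 i hs) x).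
Proof.
case=> hs0 hr hc.
have hm : forall c, mlp (L1 i hs) x c 0 = (c == sc1)%:R * ((val (g (rs i) s))%:R - (val s)%:R).
  move=> c; rewrite /L1 bank_mlp.
  have hsig : forall n, gsig (fun _ _ => 0) (fun _ => 1) n x = 1.
    by move=> n; rewrite /gsig big1 ?add0r // => j _; rewrite mul0r.
  have htau : forall n, gtau (Tc1 i) (fun n => - n%:R) n x = (s + N * rs i)%N%:R - n%:R.
    move=> n; rewrite /gtau /Tc1.
    under eq_bigr do rewrite mulrDl.
    rewrite big_split /= sum_ind1.
    under eq_bigr do rewrite -mulrA.
    by rewrite -mulr_sumr sum_ind1 hs0 hr natrD natrM.
  transitivity (\sum_(n < N * R) om1 c n * (if (s + N * rs i)%N == n then 1 else 0)).
    by apply: eq_bigr => n _; rewrite hsig htau gate_val ?ler01 ?lexx.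
  rewrite (sum_nat_ind (fun n => om1 c n)); last exact: idx_lt.
  rewrite /om1 hopnE; congr (_ * (_ - _)).
  by rewrite mulnC addnC modnMDl modn_small.
split.
- by rewrite mxE hm eqxx mul1r hs0; ring.
- by move=> j; rewrite mxE hm rc1_sc mul0r addr0 hr.
- by rewrite mxE hm cc1_sc mul0r addr0 hc.
Qed.

Lemma sum_val_mul d n (h : (n < d)%N) (F : 'I_d -> Real) :
  \sum_(a < d) (if val a == n then 1 else 0) * F a = F (Ordinal h).
Proof.
rewrite (bigD1 (Ordinal h)) //= eqxx mul1r big1 ?addr0 // => a ha.
case: eqP => [e|]; last by rewrite mul0r.
by move: ha; rewrite -val_eqE /= e eqxx.
Qed.

Lemma sum_val_if d n (h : (n < d)%N) (F G : 'I_d -> Real) :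
  (forall a, val a != n -> G a = 0) ->
  \sum_(a < d) (if n == val a then F a else G a) = F (Ordinal h).
Proof.
move=> hG; rewrite (bigD1 (Ordinal h)) //= eqxx big1 ?addr0 // => a ha.
case: eqP => [e|/eqP ne]; last by apply: hG; rewrite eq_sym.
by move: ha; rewrite -val_eqE /= e eqxx.
Qed.

Section Gather1.
Variables (rs : 'I_k'.+1 -> 'I_R) (s0 : 'I_N).
Definition X01 : 'M[Real]_(d1, K1) := \matrix_(i, j) (emb1 (khop_input s0 rs j) j) i 0.

Lemma gath1 (p : 'I_K1) :
  (mhsa [:: head1] X01 + X01) (inord (K1 + p)) ord_max = tval (khop_input s0 rs p).
Proof.
have hp := ltn_ord p.
have hc : nat_of_ord (inord (K1 + p) : 'I_d1) = (K1 + p)%N by rewrite inordK //; lia.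
rewrite mxE /head1 mhsa_last.
have -> : X01 (inord (K1 + p)) ord_max = 0.
  rewrite /X01 !mxE /= hc.
  have -> : (K1 + p == k'.+1)%N = false by apply/negbTE; lia.
  have -> : (K1 + p == K1 + K1)%N = false by apply/negbTE; lia.
  done.
rewrite addr0.
have hpd : (p < d1)%N by lia.
transitivity (\sum_(j < K1) X01 (Ordinal hpd) j).
  apply: eq_bigr => j _; rewrite mxE.
  rewrite -(sum_val_mul hpd (fun a => X01 a j)).
  apply: eq_bigr => a _; rewrite mxE hc.
  have -> : (K1 <= K1 + p)%N by apply: leq_addr.
  have -> : (K1 + p < K1 + K1)%N by lia.
  by rewrite /= addKn.
rewrite /X01.
under eq_bigr do rewrite mxE /emb1 mxE /=.
rewrite (sum_val_if hp (fun j => tval (khop_input s0 rs j))).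
  by congr (tval (khop_input s0 rs _)); apply: val_inj.
move=> a _; have -> : (nat_of_ord p == K1 + K1)%N = false by apply/negbTE; lia.
done.
Qed.

Lemma gath1c : (mhsa [:: head1] X01 + X01) cc1 ord_max = 1.
Proof.
rewrite mxE /head1 mhsa_last big1 ?add0r.
  rewrite /X01 !mxE /= cc1E ifF ?eqxx //; apply/negbTE; lia.
move=> j _; rewrite mxE big1 // => a _; rewrite mxE cc1E ltnn andbF /=.
by rewrite mul0r.
Qed.

Lemma gath1P : P1 rs s0 (col ord_max (mhsa [:: head1] X01 + X01)).
Proof.
split.
- rewrite mxE; have := gath1 ord0; rewrite /= addn0 => ->.
  by rewrite /khop_input unlift_none.
- move=> i; rewrite mxE; have := gath1 (lift ord0 i); rewrite lift0 => ->.
  by rewrite /khop_input liftK.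
- by rewrite mxE gath1c.
Qed.
End Gather1.

Lemma fold1 rs (l : seq 'I_k'.+1) (X : 'M[Real]_(d1, K1)) s :
  P1 rs s (col ord_max X) ->
  P1 rs (foldl (fun s i => g (rs i) s) s l)
     (col ord_max (foldl (fun X L => apply_layer L X) X (map (fun i => L1 i [::]) l))).
Proof.
elim: l X s => [|i l IH] X s //= h.
apply: IH; rewrite apply_layer_col /= mhsa_nil add0r.
exact: step1.
Qed.

Lemma logit1 (v : 'I_N) (x : 'cV[Real]_d1) :
  (unemb1 (inl v) *m x) 0 0 = 2 * (val v)%:R * x sc1 0 + (1 - (val v)%:R ^+ 2) * x cc1 0.
Proof.
rewrite mxE /=.
under eq_bigr do rewrite mxE mulrDl -!mulrA.
by rewrite big_split /= !sum_ind1 !mulrA.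
Qed.

Lemma main1 rs s0 : outputs M1 (khop_input s0 rs) (inl (khop_answer g s0 rs)).
Proof.
rewrite /outputs /hidden /=.
set x := col ord_max _.
have hx : P1 rs (khop_answer g s0 rs) x.
  rewrite /x /khop_answer enum_ordSl /=.
  apply: fold1.
  rewrite apply_layer_col /=.
  exact: step1 (gath1P rs s0).
case: hx => ha _ hc.
set a := khop_answer g s0 rs.
have la : (unemb1 (inl a) *m x) 0 0 = 1 + (val a)%:R ^+ 2.
  rewrite logit1 ha hc; ring.
move=> w hw; rewrite /= la.
case: w hw => [v|r] hw.
- rewrite logit1 ha hc mulr1.
  have hv : val v != val a by apply: contra hw => /eqP e; apply/eqP; congr inl; apply: val_inj.
  have := quad_lt hv; rewrite -/a; lra.
- rewrite /= /unemb1 mul0mx mxE.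
  have : 0 <= (val a)%:R ^+ 2 :> Real by apply: sqr_ge0.
  lra.
Qed.
End C1.

Definition code (R k : nat) (rs : 'I_k -> 'I_R) : nat := (\sum_(i < k) rs i * R ^ i)%N.

Lemma code_digit R k (rs : 'I_k -> 'I_R) (i : 'I_k) :
  ((code rs %/ R ^ i) %% R)%N = rs i.
Proof.
elim: k rs i => [|k IH] rs i; first by case: i.
have R0 : (0 < R)%N by case: R rs {IH} => [rs|//]; case: (rs i).
have hc : code rs = (rs ord0 + R * code (fun j => rs (lift ord0 j)))%N.
  rewrite /code big_ord_recl /= expn0 muln1 big_distrr /=; congr (_ + _)%N.
  by apply: eq_bigr => j _; rewrite /bump /= expnS mulnCA.
case: (unliftP ord0 i) => [j ->|->].
- have e : forall c, ((rs ord0 + R * c) %/ R = c)%N.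
    by move=> c; rewrite mulnC addnC divnMDl // divn_small // addn0.
  rewrite /= expnS divnMA hc e; exact: IH.
- by rewrite /= expn0 divn1 hc addnC mulnC modnMDl modn_small.
Qed.

Lemma code_lt R k (rs : 'I_k -> 'I_R) : (code rs < R ^ k)%N.
Proof.
elim: k rs => [|k IH] rs; first by rewrite /code big_ord0.
have hc : code rs = (rs ord0 + R * code (fun j => rs (lift ord0 j)))%N.
  rewrite /code big_ord_recl /= expn0 muln1 big_distrr /=; congr (_ + _)%N.
  by apply: eq_bigr => j _; rewrite /bump /= expnS mulnCA.
rewrite hc expnS.
have h1 := IH (fun j => rs (lift ord0 j)); have h2 := ltn_ord (rs ord0).
have h3 : (R * (code (fun j => rs (lift ord0 j))).+1 <= R * R ^ k)%N by rewrite leq_mul2l h1 orbT.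
move: h3; rewrite mulnS; lia.
Qed.

Section Hop2.
Variables (N R k : nat) (g : 'I_R -> {perm 'I_N}).

Definition pin (j p : nat) : nat :=
  foldl (fun s i => hopn g (s + N * ((j %/ R ^ i) %% R))%N) p (iota 0 k).

Lemma pinE (rs : 'I_k -> 'I_R) (p : 'I_N) : pin (code rs) p = val (khop_answer g p rs).
Proof.
rewrite /pin /khop_answer -val_enum_ord.
elim: (enum 'I_k) p => [|i l IH] p //=.
by rewrite code_digit hopnE IH.
Qed.

Lemma khop_inj (rs : 'I_k -> 'I_R) : injective (fun p => khop_answer g p rs).
Proof.
rewrite /khop_answer; elim: (enum 'I_k) => [|i l IH] //=.
move=> a b /IH; exact: perm_inj.
Qed.
End Hop2.

Section C2.
Variables (N R k' : nat) (g : 'I_R -> {perm 'I_N}).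
Local Notation K1 := (k'.+2).
Local Notation G := (R ^ k'.+1)%N.
Local Notation d2 := ((G + G + 4)%N.+1).

Definition emb2 (t : vocab N R) (p : 'I_K1) : 'cV[Real]_d2 :=
  \col_c (if val c == 0%N then (match t with inl s => (val s)%:R | inr _ => 0 end)
          else if val c == 1%N then (match t with inl _ => 0 | inr r => (val r * R ^ (val p).-1)%N%:R end)
          else 0).

Definition Wv2 : 'M[Real]_d2 :=
  \matrix_(a, c) (if ((val a == 2%N) && (val c == 0%N)) || ((val a == 3%N) && (val c == 1%N)) then 1 else 0).

Definition head2 : Defs.head d2 := Head 0 0 (K1%:R *: Wv2).

Definition Sc2 (n : nat) (c : 'I_d2) : Real :=
  if (n < G)%N then 0 else (if val c == 2%N then 1 else 0).
Definition s02 (n : nat) : Real := if (n < G)%N then 1 else 0.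
Definition Bv2 (n : nat) : Real := if (n < G)%N then 1 else N%:R.
Definition Tc2 (n : nat) (c : 'I_d2) : Real := if val c == 3%N then 1 else 0.
Definition jn (n : nat) : nat := if (n < G)%N then n else (n - G)%N.
Definition t02 (n : nat) : Real := - (jn n)%:R.
Definition om2 (c : 'I_d2) (n : nat) : Real := if val c == (5 + n)%N then 1 else 0.

Definition L2 : layer d2 ((G + G) * 5) :=
  Layer [:: head2] (bW1 (G + G) Sc2 Tc2 Bv2) (bb1 (G + G) s02 t02 Bv2) (bW2 (G + G) om2) 0.
Definition Lz : layer d2 ((G + G) * 5) := Layer [::] 0 0 0 0.

Definition w2 (v n : nat) : Real :=
  if (n < G)%N then \sum_(p < N) (if pin k'.+1 g n p == v then 1 - (val p)%:R ^+ 2 else 0)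
  else \sum_(p < N) (if pin k'.+1 g (n - G) p == v then 2 * (val p)%:R else 0).

Definition unemb2 (t : vocab N R) : 'rV[Real]_d2 :=
  match t with
  | inl v => \row_c (if (5 <= val c)%N then w2 (val v) (val c - 5) else 0)
  | inr _ => 0
  end.

Definition M2 : transformer (vocab N R) d2 ((G + G) * 5) K1 :=
  Transformer emb2 (L2 :: nseq k' Lz) unemb2.

Section Run.
Variables (rs : 'I_k'.+1 -> 'I_R) (s0 : 'I_N).
Definition X02 : 'M[Real]_(d2, K1) := \matrix_(i, j) (emb2 (khop_input s0 rs j) j) i 0.

Definition Q2 (x : 'cV[Real]_d2) : Prop :=
  [/\ forall c : 'I_d2, nat_of_ord c = 2%N -> x c 0 = (val s0)%:R,
      forall c : 'I_d2, nat_of_ord c = 3%N -> x c 0 = (code rs)%:R &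
      forall c : 'I_d2, (5 <= nat_of_ord c)%N -> x c 0 = 0].

Lemma gath2 : Q2 (col ord_max (mhsa [:: head2] X02 + X02)).
Proof.
have hX : forall c : 'I_d2, (2 <= val c)%N -> X02 c ord_max = 0.
  move=> c hc; rewrite /X02 !mxE.
  rewrite ifF; last by apply/negbTE; lia.
  by rewrite ifF //; apply/negbTE; lia.
split.
- move=> c hc; rewrite 2!mxE /head2 mhsa_last (hX c); last by rewrite /= hc.
  rewrite addr0.
  have h0 : (0 < d2)%N by [].
  transitivity (\sum_(j < K1) X02 (Ordinal h0) j).
    apply: eq_bigr => j _; rewrite mxE -(sum_val_mul h0 (fun a => X02 a j)).
    by apply: eq_bigr => a _; rewrite mxE /= hc /= ?andbF ?orbF.
  rewrite big_ord_recl big1 ?addr0.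
    by rewrite /X02 !mxE /= /khop_input unlift_none.
  by move=> i _; rewrite /X02 !mxE /= /khop_input liftK.
- move=> c hc; rewrite 2!mxE /head2 mhsa_last (hX c); last by rewrite /= hc.
  rewrite addr0.
  have h1 : (1 < d2)%N by lia.
  transitivity (\sum_(j < K1) X02 (Ordinal h1) j).
    apply: eq_bigr => j _; rewrite mxE -(sum_val_mul h1 (fun a => X02 a j)).
    by apply: eq_bigr => a _; rewrite mxE /= hc /= ?andbF ?orbF.
  rewrite big_ord_recl /X02 !mxE /= /khop_input unlift_none add0r.
  rewrite /code natr_sum; apply: eq_bigr => i _.
  by rewrite !mxE /= liftK.
- move=> c hc; rewrite 2!mxE /head2 mhsa_last hX; last exact: (leq_trans _ hc).
  rewrite addr0 big1 // => j _; rewrite mxE big1 // => a _; rewrite mxE.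
  have -> : (nat_of_ord c == 2%N) = false by apply/negbTE; lia.
  have -> : (nat_of_ord c == 3%N) = false by apply/negbTE; lia.
  by rewrite /= mul0r.
Qed.

Definition hval (n : nat) : Real :=
  if (n < G)%N then (if code rs == n then 1 else 0)
  else (if code rs == (n - G)%N then (val s0)%:R else 0).

Lemma mlp2 (x : 'cV[Real]_d2) : Q2 x ->
  forall c : 'I_d2, (5 <= nat_of_ord c)%N -> (x + mlp L2 x) c 0 = hval (c - 5).
Proof.
case=> h2 h3 h5 c hc.
rewrite mxE h5 // add0r /L2 bank_mlp.
have hsig : forall n, gsig Sc2 s02 n x = if (n < G)%N then 1 else (val s0)%:R.
  move=> n; rewrite /gsig /Sc2 /s02; case: ifP => _.
    by rewrite big1 ?add0r // => a _; rewrite mul0r.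
  have h2d : (2 < d2)%N by lia.
  by rewrite addr0 (sum_val_mul h2d (fun a => x a 0)) h2.
have htau : forall n, gtau Tc2 t02 n x = (code rs)%:R - (jn n)%:R.
  move=> n; rewrite /gtau /Tc2 /t02.
  have h3d : (3 < d2)%N by lia.
  by rewrite (sum_val_mul h3d (fun a => x a 0)) h3.
have hlt : (c - 5 < G + G)%N by have := ltn_ord c; lia.
transitivity (\sum_(n < G + G) gate (gsig Sc2 s02 n x) (Bv2 n) (gtau Tc2 t02 n x) *
                 (if (c - 5)%N == n then 1 else 0)).
  apply: eq_bigr => n _; rewrite /om2 mulrC; congr (_ * _).
  have -> : (nat_of_ord c == 5 + n)%N = ((c - 5)%N == n) by apply/eqP/eqP; lia.
  done.
rewrite (sum_nat_ind (fun n => gate (gsig Sc2 s02 n x) (Bv2 n) (gtau Tc2 t02 n x))) //.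
rewrite hsig htau /Bv2 /hval /jn.
case: ifP => hG.
- by rewrite gate_val ?ler01 ?lexx.
- apply: gate_val; first exact: ler0n.
  by rewrite ler_nat; exact: ltnW (ltn_ord s0).
Qed.

Lemma logit2 (v : 'I_N) (x : 'cV[Real]_d2) :
  (forall c : 'I_d2, (5 <= nat_of_ord c)%N -> x c 0 = hval (c - 5)) ->
  (unemb2 (inl v) *m x) 0 0 =
  \sum_(p < N) (if pin k'.+1 g (code rs) p == val v
                then 1 - (val p)%:R ^+ 2 + 2 * (val p)%:R * (val s0)%:R else 0).
Proof.
move=> hx; rewrite mxE.
have hcl := code_lt rs.
have hA : (5 + code rs < d2)%N by lia.
have hB : (5 + G + code rs < d2)%N by lia.
transitivity (\sum_(c < d2) ((if (5 + code rs)%N == nat_of_ord c then w2 (val v) (code rs) else 0) +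
     (if (5 + G + code rs)%N == nat_of_ord c then w2 (val v) (G + code rs) * (val s0)%:R else 0))).
  apply: eq_bigr => c _; rewrite mxE /=.
  case: (leqP 5 c) => h5; last first.
    rewrite mul0r ifF; last by apply/negbTE; lia.
    by rewrite ifF ?addr0 //; apply/negbTE; lia.
  rewrite hx // /hval.
  case: (ltnP (c - 5) G) => hn.
    have -> : ((5 + G + code rs)%N == nat_of_ord c) = false by apply/negbTE; lia.
    rewrite addr0.
    case: (eqVneq (code rs) (c - 5)%N) => e.
      rewrite ifT; last by apply/eqP; lia.
      by rewrite mulr1 e.
    by rewrite mulr0 ifF //; apply/negbTE; lia.
  have -> : ((5 + code rs)%N == nat_of_ord c) = false by apply/negbTE; lia.
  rewrite add0r.
  case: (eqVneq (code rs) (c - 5 - G)%N) => e.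
    rewrite ifT; last by apply/eqP; lia.
    by congr (w2 _ _ * _); lia.
  by rewrite mulr0 ifF //; apply/negbTE; lia.
rewrite big_split /= (sum_val_if hA (fun _ => w2 (val v) (code rs))) //.
rewrite (sum_val_if hB (fun _ => w2 (val v) (G + code rs) * (val s0)%:R)) //.
rewrite /w2 hcl ifF; last by apply/negbTE; lia.
rewrite addKn mulr_suml -big_split /=; apply: eq_bigr => p _.
by case: ifP => _; rewrite ?mul0r ?addr0 // -mulrA; ring.
Qed.
End Run.

Lemma Lz_id (x : 'cV[Real]_d2) : mlp Lz x = 0.
Proof. by rewrite /mlp /= mul0mx addr0. Qed.

Lemma fold2 (X : 'M[Real]_(d2, K1)) n :
  col ord_max (foldl (fun X L => apply_layer L X) X (nseq n Lz)) = col ord_max X.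
Proof.
elim: n X => [|n IH] X //=.
by rewrite IH apply_layer_col /= mhsa_nil add0r Lz_id addr0.
Qed.

Lemma sum_inj (f : 'I_N -> 'I_N) (finj : injective f) (F : 'I_N -> Real) (v : nat) p0 :
  val (f p0) = v -> \sum_p (if val (f p) == v then F p else 0) = F p0.
Proof.
move=> e; rewrite (bigD1 p0) //= e eqxx big1 ?addr0 // => p hp.
rewrite ifF //; apply/negbTE; apply: contra hp => /eqP h; apply/eqP; apply: finj.
by apply: val_inj; rewrite /= h -e.
Qed.

Lemma main2 rs s0 : outputs M2 (khop_input s0 rs) (inl (khop_answer g s0 rs)).
Proof.
rewrite /outputs /hidden /= fold2 apply_layer_col.
set x := (_ + _).
have hx : forall c : 'I_d2, (5 <= nat_of_ord c)%N -> x c 0 = hval rs s0 (c - 5).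
  exact: mlp2 (gath2 rs s0).
have hl := logit2 _ hx.
have hinj : injective (fun p => khop_answer g p rs) by exact: khop_inj.
set a := khop_answer g s0 rs.
have la : (unemb2 (inl a) *m x) 0 0 = 1 + (val s0)%:R ^+ 2.
  rewrite hl; under eq_bigr do rewrite pinE.
  rewrite (sum_inj hinj (fun p => 1 - (val p)%:R ^+ 2 + 2 * (val p)%:R * (val s0)%:R) (p0 := s0)) //.
  ring.
move=> w hw; rewrite /= la.
have hpos : 0 <= (val s0)%:R ^+ 2 :> Real by apply: sqr_ge0.
case: w hw => [v|r] hw; last first.
  rewrite /= /unemb2 mul0mx mxE; lra.
rewrite /= hl; under eq_bigr do rewrite pinE.
case: (pickP (fun p => khop_answer g p rs == v)) => [p0 /eqP e|none].
  rewrite (sum_inj hinj (fun p => 1 - (val p)%:R ^+ 2 + 2 * (val p)%:R * (val s0)%:R) (p0 := p0)) //;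
    last by rewrite e.
  apply: quad_lt; apply: contra hw => /eqP e0.
  by apply/eqP; congr inl; rewrite -e; congr khop_answer; apply: val_inj.
rewrite big1 => [|p _]; first lra.
rewrite ifF //; apply/negbTE; apply: contraFN (none p) => /eqP h.
by apply/eqP; apply: val_inj.
Qed.
End C2.

Local Close Scope ring_scope.

Theorem theorem3 :
  (* (1) d = O~(k), MLP width O(N R) *)
  (exists C c : nat, forall N R k : nat, (0 < N)%N -> (0 < R)%N -> (0 < k)%N ->
     forall g : 'I_R -> {perm 'I_N},
     exists (d m : nat) (M : transformer (vocab N R) d m k.+1),
       [/\ depth M = k, solves_khop g M,
           (d <= C * k * polylog N R k c)%N & (m <= C * (N * R))%N])
  /\
  (* (2) d = O~(R^k), MLP width O~(R^k) *)
  (exists C c : nat, forall N R k : nat, (0 < N)%N -> (0 < R)%N -> (0 < k)%N ->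
     forall g : 'I_R -> {perm 'I_N},
     exists (d m : nat) (M : transformer (vocab N R) d m k.+1),
       [/\ depth M = k, solves_khop g M,
           (d <= C * R ^ k * polylog N R k c)%N &
           (m <= C * R ^ k * polylog N R k c)%N]).
Proof.
split.
- exists 5%N, 0%N => N R [|k'] N0 R0 k0 g //.
  exists ((k'.+2 + k'.+2)%N.+1), (N * R * 5)%N, (M1 k' g).
  split.
  + by rewrite /depth /= !size_map -enumT size_enum_ord.
  + by move=> s0 rs; apply: main1.
  + rewrite /polylog expn0 muln1; lia.
  + lia.
- exists 10%N, 0%N => N R [|k'] N0 R0 k0 g //.
  exists ((R ^ k'.+1 + R ^ k'.+1 + 4)%N.+1), ((R ^ k'.+1 + R ^ k'.+1) * 5)%N, (M2 k' g).
  have hG : (0 < R ^ k'.+1)%N by rewrite expn_gt0 R0.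
  split.
  + by rewrite /depth /= size_nseq.
  + by move=> s0 rs; apply: main2.
  + rewrite /polylog expn0 muln1; lia.
  + rewrite /polylog expn0 muln1; lia.
Qed.
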